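(* Let $K$ be a nonempty finite set, $X=\Delta(K)$, and let $u,v\in\Delta(X)$ have finite supports $U$ and $V$. Then $d_3(u,v)\ge d_5(u,v)$.
   Context: $X=\Delta(K)\subset\mathbb R^K$ with $\|p\|_1=\sum_k|p^k|$. $\mathcal M_3(u,v)$ is the set of finite positive Borel measures $\gamma$ on $X^2\times[0,1]^2$ such that for all continuous $f:X\to\mathbb R$: - $\int\lambda f(x)\,d\gamma(x,y,\lambda,\mu)=u(f)$, and - $\int\mu f(y)\,d\gamma=v(f)$. Then $d_3(u,v)=\inf_{\gamma\in\mathcal M_3(u,v)}\int\|\lambda x-\mu y\|_1\,d\gamma$. $\mathcal M_5(u,v)$ is the set of $(\alpha,\beta)\in(\mathbb R_+^{U\times V})^2$ with: - $\sum_{y'\in V}\alpha(x,y')\le u(x)$ for all $x\in U$, and - $\sum_{x'\in U}\beta(x',y)\le v(y)$ for all $y\in V$. Then $$d_5(u,v)=\inf_{(\alpha,\beta)\in\mathcal M_5(u,v)}\Big(2+\sum_{(x,y)\in U\times V}\big(\|\alpha(x,y)x-\beta(x,y)y\|_1-\alpha(x,y)-\beta(x,y)\big)\Big).$$ *)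

(* Defs.v *)
From HB Require Import structures.
From mathcomp Require Import all_boot all_order all_algebra.
From mathcomp Require Import all_classical all_reals all_analysis.
Set Implicit Arguments. Unset Strict Implicit. Unset Printing Implicit Defensive.
Import Order.TTheory GRing.Theory Num.Theory.
Import numFieldNormedType.Exports.
Local Open Scope classical_set_scope.
Local Open Scope ring_scope.

(* K = {0,...,n-1} (n > 0); points of R^K are row vectors 'rV[R]_n. *)

Definition l1norm (R : realType) (n : nat) (p : 'rV[R]_n) : R :=
  \sum_(k < n) `|p ord0 k|.

Definition simplex (R : realType) (n : nat) : set 'rV[R]_n :=
  [set p | (forall k, 0 <= p ord0 k) /\ \sum_(k < n) p ord0 k = 1].

(* the ambient space (R^K x R^K) x (R x R), a point is ((x, y), (lambda, mu)) *)
Definition Amb (R : realType) (n : nat) : Type :=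
  (('rV[R]_n * 'rV[R]_n) * (R * R))%type.

Definition BAmb (R : realType) (n : nat) :=
  g_sigma_algebraType (@open (('rV[R]_n * 'rV[R]_n) * (R * R))%type).

Definition S3 (R : realType) (n : nat) : set (BAmb R n) :=
  [set z | @simplex R n z.1.1 /\ @simplex R n z.1.2 /\
           (0 <= z.2.1 <= 1) /\ (0 <= z.2.2 <= 1)].

(* a probability measure on X with finite support U : it is given by the
   (duplicate-free) list U of support points and the weight function w,
   with w x > 0 on U and sum_{x in U} w x = 1.  u(f) = sum_{x in U} w x f x. *)
Definition fin_prob (R : realType) (n : nat) (U : seq 'rV[R]_n) (w : 'rV[R]_n -> R) :=
  [/\ uniq U, (forall x, x \in U -> @simplex R n x),
      (forall x, x \in U -> 0 < w x) & \sum_(x <- U) w x = 1].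

Definition integ (R : realType) (n : nat) (U : seq 'rV[R]_n) (w : 'rV[R]_n -> R)
  (f : 'rV[R]_n -> R) : R := \sum_(x <- U) w x * f x.

(* M_3(u,v): finite positive Borel measures on X^2 x [0,1]^2
   (= Borel measures on the ambient space, of finite mass, carried by S3) *)
Definition M3 (R : realType) (n : nat) (U V : seq 'rV[R]_n) (wu wv : 'rV[R]_n -> R) :
  set {measure set (BAmb R n) -> \bar R} :=
  [set g | (g setT < +oo)%E /\ g (~` @S3 R n) = 0%E /\
     (forall f : 'rV[R]_n -> R, {within @simplex R n, continuous f} ->
        (\int[g]_(z in @S3 R n) (z.2.1 * f z.1.1)%:E)%E = (integ U wu f)%:E /\
        (\int[g]_(z in @S3 R n) (z.2.2 * f z.1.2)%:E)%E = (integ V wv f)%:E)].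

Definition d3 (R : realType) (n : nat) (U V : seq 'rV[R]_n) (wu wv : 'rV[R]_n -> R)
  : \bar R :=
  ereal_inf [set (\int[g]_(z in @S3 R n) (l1norm (z.2.1 *: z.1.1 - z.2.2 *: z.1.2))%:E)%E
            | g in M3 U V wu wv].

Definition M5 (R : realType) (n : nat) (U V : seq 'rV[R]_n) (wu wv : 'rV[R]_n -> R) :
  set (('rV[R]_n -> 'rV[R]_n -> R) * ('rV[R]_n -> 'rV[R]_n -> R)) :=
  [set ab | (forall x y, x \in U -> y \in V -> 0 <= ab.1 x y /\ 0 <= ab.2 x y) /\
     (forall x, x \in U -> \sum_(y' <- V) ab.1 x y' <= wu x) /\
     (forall y, y \in V -> \sum_(x' <- U) ab.2 x' y <= wv y)].

Definition d5 (R : realType) (n : nat) (U V : seq 'rV[R]_n) (wu wv : 'rV[R]_n -> R)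
  : \bar R :=
  ereal_inf [set (2 + \sum_(x <- U) \sum_(y <- V)
       (l1norm (ab.1 x y *: x - ab.2 x y *: y) - ab.1 x y - ab.2 x y))%:E
     | ab in M5 U V wu wv].

(* Main.v *)
Require Import Defs.
From HB Require Import structures.
From mathcomp Require Import all_boot all_order all_algebra.
From mathcomp Require Import all_classical all_reals all_analysis.
From mathcomp Require Import measurable_realfun.
From mathcomp Require Import lra.
Import Order.TTheory GRing.Theory Num.Theory.
Import numFieldNormedType.Exports.
Local Open Scope classical_set_scope.
Local Open Scope ring_scope.
Section Aux.
Variables (R : realType) (n : nat).
Implicit Types x y : 'rV[R]_n.

Lemma l1norm_ge0 x : 0 <= l1norm x.
Proof. by apply: sumr_ge0 => k _. Qed.

Lemma l1norm0 : l1norm (0 : 'rV[R]_n) = 0.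
Proof. by rewrite /l1norm big1 // => k _; rewrite mxE normr0. Qed.

Lemma l1norm_eq0 x : l1norm x = 0 -> x = 0.
Proof.
move=> h; apply/matrixP => i k; rewrite mxE (ord1 i).
have := @psumr_eq0P R _ xpredT (fun k => `|x ord0 k|) (fun _ _ => normr_ge0 _) h k isT.
by move/eqP; rewrite normr_eq0 => /eqP.
Qed.

Lemma l1norm_subr_eq0 x y : (l1norm (x - y) == 0) = (x == y).
Proof.
apply/eqP/eqP => [/l1norm_eq0/eqP|->]; first by rewrite subr_eq0 => /eqP.
by rewrite subrr l1norm0.
Qed.

Lemma simplexE x : simplex x <-> (l1norm x = 1 /\ \sum_(k < n) x ord0 k = 1).
Proof.
split=> [[h0 h1]|[h0 h1]].
  by split=> //; rewrite /l1norm -h1; apply: eq_bigr => k _; rewrite ger0_norm.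
split=> // k.
have h : \sum_(k < n) (`|x ord0 k| - x ord0 k) = 0.
  by rewrite sumrB -/(l1norm x) h0 h1 subrr.
have := @psumr_eq0P R _ xpredT (fun k => `|x ord0 k| - x ord0 k) _ h k isT.
move=> /(_ _)/eqP; rewrite subr_eq0 => /(_ _)/eqP <- //.
by move=> i _; rewrite subr_ge0 ler_norm.
Qed.

Lemma absmin (u v : R) : `|u - v| + 2 * Num.min u v = u + v.
Proof.
have [h|h] := leP u v.
  by rewrite ler0_norm ?subr_le0 //; lra.
by rewrite ger0_norm ?subr_ge0 ?(ltW h) //; lra.
Qed.

Lemma key_id x y (a b : R) : simplex x -> simplex y ->
  l1norm (a *: x - b *: y) + 2 * \sum_(k < n) Num.min (a * x ord0 k) (b * y ord0 k)
  = a + b.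
Proof.
move=> [_ hx] [_ hy].
rewrite /l1norm mulr_sumr -big_split /=.
have -> : a + b = \sum_(k < n) (a * x ord0 k + b * y ord0 k).
  by rewrite big_split /= -!mulr_sumr hx hy !mulr1.
by apply: eq_bigr => k _; rewrite !mxE absmin.
Qed.

Lemma sum_ind (s : seq 'rV[R]_n) x : uniq s ->
  \sum_(a <- s) (x == a)%:R = (x \in s)%:R :> R.
Proof.
elim: s => [|a s IH] /=; first by rewrite big_nil.
move=> /andP[nas us]; rewrite big_cons IH // in_cons.
have [->|_] := eqVneq x a; last by rewrite add0r.
by rewrite (negbTE nas) addr0.
Qed.

Lemma sum_ind_bnd (s : seq 'rV[R]_n) x : uniq s ->
  0 <= \sum_(a <- s) (x == a)%:R :> R /\ \sum_(a <- s) (x == a)%:R <= 1 :> R.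
Proof. by move=> us; rewrite sum_ind //; case: (x \in s). Qed.

End Aux.
Section Meas.
Variables (R : realType) (n : nat).
Local Notation Tt := (('rV[R]_n * 'rV[R]_n) * (R * R))%type.
Local Notation T := (BAmb R n).

Lemma fst_cont {A B : topologicalType} : continuous (@fst A B).
Proof. move=> [x y]; exact: cvg_fst. Qed.
Lemma snd_cont {A B : topologicalType} : continuous (@snd A B).
Proof. move=> [x y]; exact: cvg_snd. Qed.

Lemma cont_sum {Y : topologicalType} (I : Type) (s : seq I) (f : I -> Y -> R) :
  (forall i, continuous (f i)) -> continuous (fun y => \sum_(i <- s) f i y).
Proof.
move=> fc; elim: s => [|a s IH].
  by under eq_fun do rewrite big_nil; exact: cst_continuous.
under eq_fun do rewrite big_cons.
by move=> y; apply: continuousD; [exact: fc|exact: IH].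
Qed.

Lemma cont_prod {Y : topologicalType} (I : Type) (s : seq I) (P : pred I) (f : I -> Y -> R) :
  (forall i, continuous (f i)) -> continuous (fun y => \prod_(i <- s | P i) f i y).
Proof.
move=> fc; elim: s => [|a s IH].
  by under eq_fun do rewrite big_nil; exact: cst_continuous.
under eq_fun do rewrite big_cons.
case: (P a); last exact: IH.
by move=> y; apply: continuousM; [exact: fc|exact: IH].
Qed.

Lemma l1norm_cont : continuous (@l1norm R n).
Proof.
rewrite /l1norm; apply: cont_sum => k x.
apply: continuous_comp; first exact: coord_continuous.
exact: norm_continuous.
Qed.

Lemma min_cont {Y : topologicalType} (f g : Y -> R) : continuous f -> continuous g ->
  continuous (fun y => Num.min (f y) (g y)).
Proof. move=> cf cg y; exact: (@continuous_min R Y f g y (cf y) (cg y)). Qed.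

Lemma mul_cont {Y : topologicalType} (f g : Y -> R) : continuous f -> continuous g ->
  continuous (fun y => f y * g y).
Proof. move=> cf cg y; exact: (continuousM (cf y) (cg y)). Qed.

Lemma comp_cont {X Y Z : topologicalType} (f : X -> Y) (g : Y -> Z) :
  continuous f -> continuous g -> continuous (fun x => g (f x)).
Proof. move=> cf cg x; exact: (continuous_comp (cf x) (cg (f x))). Qed.

Lemma l1dist_cont (x0 : 'rV[R]_n) : continuous (fun x : 'rV[R]_n => l1norm (x - x0)).
Proof.
apply: comp_cont l1norm_cont => x.
by apply: continuousB => //; exact: cst_continuous.
Qed.

Lemma c11 : continuous (fun z : Tt => z.1.1).
Proof. by move=> z; apply: continuous_comp; [exact: fst_cont|exact: fst_cont]. Qed.
Lemma c12 : continuous (fun z : Tt => z.1.2).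
Proof. by move=> z; apply: continuous_comp; [exact: fst_cont|exact: snd_cont]. Qed.
Lemma c21 : continuous (fun z : Tt => z.2.1).
Proof. by move=> z; apply: continuous_comp; [exact: snd_cont|exact: fst_cont]. Qed.
Lemma c22 : continuous (fun z : Tt => z.2.2).
Proof. by move=> z; apply: continuous_comp; [exact: snd_cont|exact: snd_cont]. Qed.

Lemma coord_cont (P : Tt -> 'rV[R]_n) k : continuous P -> continuous (fun z => P z ord0 k).
Proof. move=> cP z; exact: (@continuous_comp _ _ _ P (fun M : 'rV[R]_n => M ord0 k) z (cP z) (@coord_continuous R 1 n ord0 k (P z))). Qed.

Lemma cont_meas {f : Tt -> R} : continuous f ->
  measurable_fun (setT : set T) (f : T -> R).
Proof.
move=> /continuousP cf.
apply: (measurability _ (measurable_realfun.RGenOpens.measurableE R)).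
move=> _ [_ [a [b ->] <-]].
rewrite setTI. apply: sub_sigma_algebra. apply: cf. exact: interval_open.
Qed.

Lemma cont_measD (D : set T) {f : Tt -> R} : measurable D -> continuous f ->
  measurable_fun D (f : T -> R).
Proof. move=> mD cf; exact: (measurable_funS measurableT (@subsetT _ D) (cont_meas cf)). Qed.

Lemma cont_pre {f : Tt -> R} {B : set R} : continuous f -> measurable B ->
  measurable ((f : T -> R) @^-1` B).
Proof. by move=> cf mB; have := cont_meas cf measurableT _ mB; rewrite setTI. Qed.

Lemma meas_ind (P : Tt -> 'rV[R]_n) (x0 : 'rV[R]_n) : continuous P ->
  measurable_fun (setT : set T) (fun z : T => (P z == x0)%:R : R).
Proof.
move=> cP.
have cf : continuous (fun z : Tt => l1norm (P z - x0)).
  move=> z; exact: (@continuous_comp _ _ _ P (fun x => l1norm (x - x0)) z (cP z) (l1dist_cont x0 (P z))).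
have mA := cont_pre cf (measurable_set1 0).
have -> : (fun z : T => (P z == x0)%:R : R) = \1_((fun z : T => l1norm (P z - x0)) @^-1` [set 0]).
  apply/funext => z; rewrite indicE.
  case: (boolP (P z == x0)) => h.
    by rewrite mem_set //= (eqP h) subrr l1norm0.
  rewrite memNset //= => /eqP; rewrite l1norm_subr_eq0; exact/negP.
exact: measurable_indic.
Qed.

Lemma mS3 : measurable (@S3 R n : set T).
Proof.
have cs1 : continuous (fun z : Tt => l1norm z.1.1) by move=> z; exact: (@continuous_comp _ _ _ (fun z : Tt => z.1.1) (@l1norm R n) z (c11 z) (l1norm_cont _)).
have cs2 : continuous (fun z : Tt => l1norm z.1.2) by move=> z; exact: (@continuous_comp _ _ _ (fun z : Tt => z.1.2) (@l1norm R n) z (c12 z) (l1norm_cont _)).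
have cs3 : continuous (fun z : Tt => \sum_(k < n) z.1.1 ord0 k).
  by apply: cont_sum => k; apply: coord_cont c11.
have cs4 : continuous (fun z : Tt => \sum_(k < n) z.1.2 ord0 k).
  by apply: cont_sum => k; apply: coord_cont c12.
have -> : (@S3 R n : set T) =
  ((fun z : T => l1norm z.1.1) @^-1` [set 1] `&`
   (fun z : T => \sum_(k < n) z.1.1 ord0 k) @^-1` [set 1]) `&`
  (((fun z : T => l1norm z.1.2) @^-1` [set 1] `&`
   (fun z : T => \sum_(k < n) z.1.2 ord0 k) @^-1` [set 1]) `&`
  ((fun z : T => z.2.1) @^-1` `[0, 1]%classic `&`
   (fun z : T => z.2.2) @^-1` `[0, 1]%classic)).
  apply/seteqP; split => z /=.
    move=> [/simplexE [h1 h2] [/simplexE [h3 h4] [h5 h6]]].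
    by rewrite !in_itv /= h5 h6.
  move=> [[h1 h2] [[h3 h4] []]]; rewrite !in_itv /= => h5 h6.
  by split; [apply/simplexE|split; [apply/simplexE|]].
apply: measurableI; first apply: measurableI.
- exact: cont_pre cs1 (measurable_set1 _).
- exact: cont_pre cs3 (measurable_set1 _).
apply: measurableI; first apply: measurableI.
- exact: cont_pre cs2 (measurable_set1 _).
- exact: cont_pre cs4 (measurable_set1 _).
apply: measurableI.
- exact: cont_pre c21 (measurable_itv _).
- exact: cont_pre c22 (measurable_itv _).
Qed.

Section Side.
Local Notation Tt := (('rV[R]_n * 'rV[R]_n) * (R * R))%type.
Local Notation T := (BAmb R n).
Local Notation D := (@S3 R n : set T).
Variable (g : {measure set T -> \bar R}).
Variables (P : Tt -> 'rV[R]_n) (L : Tt -> R) (W : seq 'rV[R]_n) (w : 'rV[R]_n -> R).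
Hypotheses (cP : continuous P) (cL : continuous L) (L0 : forall z, D z -> 0 <= L z)
  (hW : fin_prob W w)
  (hint : forall f : 'rV[R]_n -> R, {within @simplex R n, continuous f} ->
     (\int[g]_(z in D) (L z * f (P z))%:E)%E = (integ W w f)%:E).

Lemma wcont (f : 'rV[R]_n -> R) : continuous f -> {within @simplex R n, continuous f}.
Proof. exact: continuous_subspaceT. Qed.

Lemma mE (f : T -> R) : measurable_fun D f -> measurable_fun D (fun z => (f z)%:E).
Proof. by move=> h; apply/measurable_EFinP. Qed.

Lemma mL : measurable_fun D (L : T -> R).
Proof. exact: (cont_measD _ mS3 cL). Qed.

Lemma mind x0 : measurable_fun D (fun z : T => (P z == x0)%:R : R).
Proof. exact: (measurable_funS measurableT (@subsetT _ D) (meas_ind P x0 cP)). Qed.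

Lemma intL : (\int[g]_(z in D) (L z)%:E = 1)%E.
Proof using All.
have := hint (fun _ => 1) (wcont (fun _ => 1) (@cst_continuous _ _ (1:R))).
under eq_integral do rewrite mulr1.
move=> ->; congr (_%:E); rewrite /integ (eq_bigr w); first by case: hW.
by move=> x _; rewrite mulr1.
Qed.

Let bump x0 (x : 'rV[R]_n) : R :=
  \prod_(x1 <- W | x1 != x0) Num.min 1 (l1norm (x - x1) / l1norm (x0 - x1)).

Let bump_cont x0 : continuous (bump x0).
Proof.
apply: cont_prod => x1; apply: min_cont; first exact: cst_continuous.
apply: mul_cont; first exact: l1dist_cont.
exact: cst_continuous.
Qed.

Let bump_ge0 x0 x : 0 <= bump x0 x.
Proof.
rewrite /bump; apply: prodr_ge0 => x1 _; rewrite le_min ler01 /=.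
by apply: divr_ge0; apply: l1norm_ge0.
Qed.

Let bump_x0 x0 : bump x0 x0 = 1.
Proof.
rewrite /bump; apply: big1 => x1 h; rewrite divff ?minxx //.
by rewrite l1norm_subr_eq0 eq_sym.
Qed.

Let bump_out x0 x : x \in W -> x != x0 -> bump x0 x = 0.
Proof.
move=> xW hx; case: hW => uW _ _ _.
rewrite /bump; apply/eqP; rewrite prodf_seq_eq0; apply/hasP; exists x => //.
by rewrite hx /= subrr l1norm0 mul0r min_r ?ler01.
Qed.

Let integ_bump x0 : x0 \in W -> integ W w (bump x0) = w x0.
Proof.
move=> xW; case: hW => uW _ _ _.
rewrite /integ (bigD1_seq x0) //= bump_x0 mulr1 big1_seq ?addr0 // => x /andP[hx xW'].
by rewrite bump_out ?mulr0.
Qed.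

Lemma int_cell x0 (s : T -> R) : x0 \in W -> measurable_fun D s ->
  (forall z, D z -> 0 <= s z <= 1) ->
  (\int[g]_(z in D) (L z * ((P z == x0)%:R * s z))%:E <= (w x0)%:E)%E.
Proof using All.
move=> xW ms s01.
rewrite -integ_bump // -(hint (bump x0) (wcont (bump x0) (bump_cont x0))).
apply: ge0_le_integral.
- exact: mS3.
- move=> z Dz; rewrite lee_fin; apply: mulr_ge0; first exact: L0.
  by apply: mulr_ge0; [case: (_ == _)|case/andP: (s01 z Dz)].
- by apply: mE; apply: measurable_funM; [exact: mL|apply: measurable_funM; [exact: mind|exact: ms]].
- apply: mE; apply: cont_measD; first exact: mS3.
  apply: mul_cont cL _ => z.
  exact: (@continuous_comp _ _ _ P (bump x0) z (cP z) (bump_cont x0 (P z))).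
- move=> z Dz; rewrite lee_fin; apply: ler_wpM2l; first exact: L0.
  have [->|_] := eqVneq (P z) x0; last by rewrite mul0r bump_ge0.
  by rewrite mul1r bump_x0; case/andP: (s01 z Dz).
Qed.

Let Dist (x : 'rV[R]_n) : R := \prod_(x1 <- W) l1norm (x - x1).

Let Dist_cont : continuous Dist.
Proof. by rewrite /Dist; apply: cont_prod => x1; exact: l1dist_cont. Qed.

Let Dist_ge0 x : 0 <= Dist x.
Proof. by rewrite /Dist; apply: prodr_ge0 => x1 _; exact: l1norm_ge0. Qed.

Let Dist_W x : x \in W -> Dist x = 0.
Proof.
move=> xW; apply/eqP; rewrite /Dist prodf_seq_eq0; apply/hasP; exists x => //.
by rewrite /= subrr l1norm0 eqxx.
Qed.

Let Dist_pos x : x \notin W -> Dist x != 0.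
Proof.
move=> hx; rewrite /Dist prodf_seq_neq0; apply/allP => x1 x1W /=.
by rewrite l1norm_subr_eq0; apply: contraNneq hx => ->.
Qed.

Lemma meas_notin : measurable_fun D (fun z : T => (P z \notin W)%:R : R).
Proof using All.
case: hW => uW _ _ _.
have -> : (fun z : T => (P z \notin W)%:R : R) = fun z => 1 - \sum_(a <- W) (P z == a)%:R.
  by apply/funext => z; rewrite sum_ind //; case: (P z \in W); rewrite ?subrr ?subr0.
apply: measurable_funB; first exact: measurable_cst.
by apply: measurable_sum => a; exact: mind.
Qed.

Lemma int_out : (\int[g]_(z in D) (L z * (P z \notin W)%:R)%:E = 0)%E.
Proof using All.
have mLD : measurable_fun D (fun z : T => (L z * Dist (P z))%:E).
  apply: mE; apply: cont_measD; first exact: mS3.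
  apply: mul_cont cL _ => z.
  exact: (@continuous_comp _ _ _ P Dist z (cP z) (Dist_cont (P z))).
have h0 : (\int[g]_(z in D) (L z * Dist (P z))%:E = 0)%E.
  rewrite (hint Dist (wcont Dist Dist_cont)); congr (_%:E).
  by rewrite /integ big1_seq // => x /andP[_ xW]; rewrite Dist_W ?mulr0.
have habs : (\int[g]_(z in D) `|(L z * Dist (P z))%:E| = 0)%E.
  rewrite -h0; apply: eq_integral => z; rewrite in_setE => Dz.
  by rewrite gee0_abs // lee_fin mulr_ge0 // ?L0 // Dist_ge0.
have hae := (ae_eq_integral_abs g mS3 mLD).1 habs.
have hae2 : ae_eq g D (fun z : T => (L z * (P z \notin W)%:R)%:E) (cst 0%E).
  move: hae; apply: filterS => z /= h Dz; have := h Dz.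
  case: (boolP (P z \in W)) => hz /=; first by rewrite mulr0.
  move=> /eqP; rewrite eqe mulf_eq0 (negbTE (Dist_pos _ hz)) orbF => /eqP ->.
  by rewrite mul0r.
rewrite (ae_eq_integral (cst 0%E) _ mS3 _ (measurable_cst _) hae2) ?integral0 //.
apply: mE; apply: measurable_funM; first exact: mL.
exact: meas_notin.
Qed.

End Side.

Local Notation D := (@S3 R n : set T).

Lemma fin01 (e : \bar R) : (0 <= e)%E -> (e <= 1)%E -> (fine e)%:E = e.
Proof.
move=> h0 h1; rewrite fineK // ge0_fin_numE //.
by apply: (le_lt_trans h1); rewrite ltry.
Qed.

Lemma D_props (z : T) : D z ->
  [/\ forall k, 0 <= z.1.1 ord0 k, forall k, 0 <= z.1.2 ord0 k,
      0 <= z.2.1 & 0 <= z.2.2].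
Proof. by move=> [[h1 _] [[h2 _] [/andP[h3 _] /andP[h4 _]]]]. Qed.

Lemma main_ineq (U V : seq 'rV[R]_n) (wu wv : 'rV[R]_n -> R)
  (hu : fin_prob U wu) (hv : fin_prob V wv) (g : {measure set T -> \bar R}) :
  M3 U V wu wv g ->
  (d5 U V wu wv <= \int[g]_(z in D) (l1norm (z.2.1 *: z.1.1 - z.2.2 *: z.1.2))%:E)%E.
Proof.
case=> _ [_ htest].
have hX f (hf : {within @simplex R n, continuous f}) := (htest f hf).1.
have hY f (hf : {within @simplex R n, continuous f}) := (htest f hf).2.
have L0X : forall z : T, D z -> 0 <= z.2.1 by move=> z /D_props[].
have L0Y : forall z : T, D z -> 0 <= z.2.2 by move=> z /D_props[].
have iX := intL g _ _ _ _ c11 c21 L0X hu hX.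
have iY := intL g _ _ _ _ c12 c22 L0Y hv hY.
case: (hu) => uU sU _ _; case: (hv) => uV sV _ _.
pose c x0 y0 (z : T) : R := (z.1.1 == x0)%:R * (z.1.2 == y0)%:R.
pose al x0 y0 := fine (\int[g]_(z in D) (z.2.1 * c x0 y0 z)%:E).
pose be x0 y0 := fine (\int[g]_(z in D) (z.2.2 * c x0 y0 z)%:E).
pose m (z : Tt) : R := \sum_(k < n) Num.min (z.2.1 * z.1.1 ord0 k) (z.2.2 * z.1.2 ord0 k).
have mi1 x0 : measurable_fun D (fun z : T => (z.1.1 == x0)%:R : R).
  exact: (measurable_funS measurableT (@subsetT _ D) (meas_ind _ x0 c11)).
have mi2 y0 : measurable_fun D (fun z : T => (z.1.2 == y0)%:R : R).
  exact: (measurable_funS measurableT (@subsetT _ D) (meas_ind _ y0 c12)).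
have mc x0 y0 : measurable_fun D (c x0 y0) by apply: measurable_funM.
have ml1 : measurable_fun D (fun z : T => z.2.1) := cont_measD _ mS3 c21.
have ml2 : measurable_fun D (fun z : T => z.2.2) := cont_measD _ mS3 c22.
have c01 x0 y0 z : 0 <= c x0 y0 z <= 1.
  by rewrite /c; case: (_ == _); case: (_ == _); rewrite /= ?mul0r ?mul1r ?ler01 ?lexx.
have Ia x0 y0 : (0 <= \int[g]_(z in D) (z.2.1 * c x0 y0 z)%:E)%E /\
                (\int[g]_(z in D) (z.2.1 * c x0 y0 z)%:E <= 1)%E.
  split; first by apply: integral_ge0 => z Dz; rewrite lee_fin mulr_ge0 ?L0X //; case/andP: (c01 x0 y0 z).
  rewrite -iX; apply: ge0_le_integral.
  - exact: mS3.
  - by move=> z Dz /=; rewrite lee_fin mulr_ge0 ?L0X //; case/andP: (c01 x0 y0 z).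
  - by apply: mE; apply: measurable_funM.
  - exact: mE.
  - move=> z Dz; rewrite lee_fin ler_piMr ?L0X //; by case/andP: (c01 x0 y0 z).
have Ib x0 y0 : (0 <= \int[g]_(z in D) (z.2.2 * c x0 y0 z)%:E)%E /\
                (\int[g]_(z in D) (z.2.2 * c x0 y0 z)%:E <= 1)%E.
  split; first by apply: integral_ge0 => z Dz; rewrite lee_fin mulr_ge0 ?L0Y //; case/andP: (c01 x0 y0 z).
  rewrite -iY; apply: ge0_le_integral.
  - exact: mS3.
  - by move=> z Dz /=; rewrite lee_fin mulr_ge0 ?L0Y //; case/andP: (c01 x0 y0 z).
  - by apply: mE; apply: measurable_funM.
  - exact: mE.
  - move=> z Dz; rewrite lee_fin ler_piMr ?L0Y //; by case/andP: (c01 x0 y0 z).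
have alE x0 y0 : ((al x0 y0)%:E = \int[g]_(z in D) (z.2.1 * c x0 y0 z)%:E)%E.
  by case: (Ia x0 y0) => h0 h1; rewrite /al fin01.
have beE x0 y0 : ((be x0 y0)%:E = \int[g]_(z in D) (z.2.2 * c x0 y0 z)%:E)%E.
  by case: (Ib x0 y0) => h0 h1; rewrite /be fin01.
apply: ereal_inf_le.
exists ((2 + \sum_(x <- U) \sum_(y <- V)
    (l1norm (al x y *: x - be x y *: y) - al x y - be x y))%:E).
  exists (al, be) => //.
  split; [|split].
  - by move=> x y _ _; split; apply: fine_ge0; [case: (Ia x y)|case: (Ib x y)].
  - move=> x0 x0U /=.
    rewrite -lee_fin -sumEFin.
    under eq_bigr do rewrite alE.
    rewrite -(ge0_integral_sum g mS3 (f := fun y' (z : T) => (z.2.1 * c x0 y' z)%:E)); last 2 first.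
      - by move=> y'; apply: mE; apply: measurable_funM.
      - by move=> y' z Dz; rewrite lee_fin mulr_ge0 ?L0X //; case/andP: (c01 x0 y' z).
    rewrite (eq_integral (fun z : T => (z.2.1 * ((z.1.1 == x0)%:R *
        \sum_(y' <- V) (z.1.2 == y')%:R))%:E)); last first.
      by move=> z _; rewrite sumEFin -mulr_sumr -mulr_sumr.
    apply: (int_cell g _ _ _ _ c11 c21 L0X hu hX x0
      (fun z : T => \sum_(y' <- V) (z.1.2 == y')%:R) x0U).
      by apply: measurable_sum => y'.
    by move=> z _; case: (@sum_ind_bnd R n V z.1.2 uV) => -> ->.
  - move=> y0 y0V /=.
    rewrite -lee_fin -sumEFin.
    under eq_bigr do rewrite beE.
    rewrite -(ge0_integral_sum g mS3 (f := fun x' (z : T) => (z.2.2 * c x' y0 z)%:E)); last 2 first.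
      - by move=> x'; apply: mE; apply: measurable_funM.
      - by move=> x' z Dz; rewrite lee_fin mulr_ge0 ?L0Y //; case/andP: (c01 x' y0 z).
    rewrite (eq_integral (fun z : T => (z.2.2 * ((z.1.2 == y0)%:R *
        \sum_(x' <- U) (z.1.1 == x')%:R))%:E)); last first.
      move=> z _; rewrite sumEFin -mulr_sumr; congr (_%:E); congr (_ * _).
      by rewrite mulr_sumr; apply: eq_bigr => x' _; rewrite mulrC.
    apply: (int_cell g _ _ _ _ c12 c22 L0Y hv hY y0
      (fun z : T => \sum_(x' <- U) (z.1.1 == x')%:R) y0V).
      by apply: measurable_sum => x'.
    by move=> z _; case: (@sum_ind_bnd R n U z.1.1 uU) => -> ->.
pose A := \sum_(x <- U) \sum_(y <- V) \sum_(k < n)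
   Num.min (al x y * x ord0 k) (be x y * y ord0 k).
have -> : 2 + \sum_(x <- U) \sum_(y <- V)
    (l1norm (al x y *: x - be x y *: y) - al x y - be x y) = 2 - 2 * A.
  rewrite -mulNr mulr_sumr; congr (_ + _); apply: eq_big_seq => x xU.
  rewrite mulr_sumr; apply: eq_big_seq => y yV.
  have := @key_id R n x y (al x y) (be x y) (sU x xU) (sV y yV); lra.
have cm : continuous m.
  apply: cont_sum => k; apply: min_cont; apply: mul_cont.
  - exact: c21.
  - exact: coord_cont _ k c11.
  - exact: c22.
  - exact: coord_cont _ k c12.
have mm : measurable_fun D (m : T -> R) := cont_measD _ mS3 cm.
have cN : continuous (fun z : Tt => l1norm (z.2.1 *: z.1.1 - z.2.2 *: z.1.2)).
  move=> z.
  apply: (@continuous_comp _ _ _ (fun z : Tt => z.2.1 *: z.1.1 - z.2.2 *: z.1.2) (@l1norm R n) z _ (l1norm_cont _)).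
  by apply: continuousB; apply: continuousZ; [exact: c21|exact: c11|exact: c22|exact: c12].
have mN : measurable_fun D (fun z : T => l1norm (z.2.1 *: z.1.1 - z.2.2 *: z.1.2)) :=
  cont_measD _ mS3 cN.
have m0 z : D z -> 0 <= m z.
  case/D_props=> h1 h2 h3 h4; apply: sumr_ge0 => k _.
  by rewrite le_min !mulr_ge0.
have mle z : D z -> m z <= z.2.1 /\ m z <= z.2.2.
  move=> [[_ s1] [[_ s2] _]]; split.
    apply: (@le_trans _ _ (\sum_(k < n) z.2.1 * z.1.1 ord0 k)).
      by apply: ler_sum => k _; rewrite ge_min lexx.
    by rewrite -mulr_sumr s1 mulr1.
  apply: (@le_trans _ _ (\sum_(k < n) z.2.2 * z.1.2 ord0 k)).
    by apply: ler_sum => k _; rewrite ge_min lexx orbT.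
  by rewrite -mulr_sumr s2 mulr1.
have hNm z : D z -> l1norm (z.2.1 *: z.1.1 - z.2.2 *: z.1.2) + (m z + m z) = z.2.1 + z.2.2.
  move=> [s1 [s2 _]]; rewrite -(@key_id R n z.1.1 z.1.2 z.2.1 z.2.2 s1 s2) /m; congr (_ + _).
  by rewrite mulr2n mulrDl mul1r.
have mmE : measurable_fun D (fun z : T => (m z)%:E) := mE _ mm.
have m0E : forall z : T, D z -> (0 <= (m z)%:E)%E by move=> z Dz; rewrite lee_fin m0.
have E1 : (\int[g]_(z in D) ((l1norm (z.2.1 *: z.1.1 - z.2.2 *: z.1.2))%:E
              + ((m z)%:E + (m z)%:E)) =
          \int[g]_(z in D) (l1norm (z.2.1 *: z.1.1 - z.2.2 *: z.1.2))%:E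
            + \int[g]_(z in D) ((m z)%:E + (m z)%:E))%E.
  apply: ge0_integralD.
  - exact: mS3.
  - by move=> z Dz; rewrite lee_fin l1norm_ge0.
  - exact: mE.
  - by move=> z Dz; rewrite adde_ge0 ?m0E.
  - exact: emeasurable_funD.
have E2 : (\int[g]_(z in D) ((m z)%:E + (m z)%:E) =
     \int[g]_(z in D) (m z)%:E + \int[g]_(z in D) (m z)%:E)%E.
  exact: (ge0_integralD g mS3 m0E mmE m0E mmE).
have E3 : (\int[g]_(z in D) ((z.2.1)%:E + (z.2.2)%:E) =
     \int[g]_(z in D) (z.2.1)%:E + \int[g]_(z in D) (z.2.2)%:E)%E.
  apply: ge0_integralD.
  - exact: mS3.
  - by move=> z Dz; rewrite lee_fin L0X.
  - exact: mE.
  - by move=> z Dz; rewrite lee_fin L0Y.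
  - exact: mE.
have E4 : (\int[g]_(z in D) ((l1norm (z.2.1 *: z.1.1 - z.2.2 *: z.1.2))%:E
              + ((m z)%:E + (m z)%:E)) =
           \int[g]_(z in D) ((z.2.1)%:E + (z.2.2)%:E))%E.
  apply: eq_integral => z; rewrite in_setE => Dz.
  by rewrite -!EFinD hNm.
have cell x0 y0 : x0 \in U -> y0 \in V ->
  (\int[g]_(z in D) (c x0 y0 z * m z)%:E <=
   (\sum_(k < n) Num.min (al x0 y0 * x0 ord0 k) (be x0 y0 * y0 ord0 k))%:E)%E.
  move=> x0U y0V.
  have [sx0 _] := sU x0 x0U; have [sy0 _] := sV y0 y0V.
  rewrite (eq_integral (fun z : T => \sum_(k < n)
     (c x0 y0 z * Num.min (z.2.1 * z.1.1 ord0 k) (z.2.2 * z.1.2 ord0 k))%:E)); last first.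
    by move=> z _; rewrite sumEFin mulr_sumr.
  rewrite ge0_integral_sum; first last.
  - move=> k z Dz; rewrite lee_fin mulr_ge0 //; first by case/andP: (c01 x0 y0 z).
    by case/D_props: Dz => h1 h2 h3 h4; rewrite le_min !mulr_ge0.
  - move=> k; apply: mE; apply: measurable_funM; first exact: mc.
    apply: cont_measD; first exact: mS3.
    by apply: min_cont; apply: mul_cont; [exact: c21|exact: coord_cont _ k c11|exact: c22|exact: coord_cont _ k c12].
  - exact: mS3.
  rewrite -sumEFin; apply: lee_sum => k _.
  rewrite EFin_min le_min; apply/andP; split.
  - apply: (@le_trans _ _ (\int[g]_(z in D) ((x0 ord0 k)%:E * (z.2.1 * c x0 y0 z)%:E))%E).
      apply: ge0_le_integral.
      + exact: mS3.
      + move=> z Dz; rewrite lee_fin mulr_ge0 //; first by case/andP: (c01 x0 y0 z).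
        by case/D_props: Dz => h1 h2 h3 h4; rewrite le_min !mulr_ge0.
      + apply: mE; apply: measurable_funM; first exact: mc.
        apply: cont_measD; first exact: mS3.
        by apply: min_cont; apply: mul_cont; [exact: c21|exact: coord_cont _ k c11|exact: c22|exact: coord_cont _ k c12].
      + apply: emeasurable_funM; first exact: measurable_cst.
        by apply: mE; apply: measurable_funM.
      + move=> z Dz; rewrite -EFinM lee_fin /c.
        case: eqP => [->|_]; case: eqP => [->|_] /=; try lra.
        have : Num.min (z.2.1 * x0 ord0 k) (z.2.2 * y0 ord0 k) <= z.2.1 * x0 ord0 k.
          by rewrite ge_min lexx.
        lra.
    have f10 : forall z : T, D z -> (0 <= (z.2.1 * c x0 y0 z)%:E)%E.
      by move=> z Dz; rewrite lee_fin mulr_ge0 ?L0X //; case/andP: (c01 x0 y0 z).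
    have mf1 : measurable_fun D (fun z : T => (z.2.1 * c x0 y0 z)%:E).
      by apply: mE; apply: measurable_funM.
    by rewrite (ge0_integralZl_EFin g mS3 f10 mf1 (sx0 k)) -alE -EFinM mulrC.
  - apply: (@le_trans _ _ (\int[g]_(z in D) ((y0 ord0 k)%:E * (z.2.2 * c x0 y0 z)%:E))%E).
      apply: ge0_le_integral.
      + exact: mS3.
      + move=> z Dz; rewrite lee_fin mulr_ge0 //; first by case/andP: (c01 x0 y0 z).
        by case/D_props: Dz => h1 h2 h3 h4; rewrite le_min !mulr_ge0.
      + apply: mE; apply: measurable_funM; first exact: mc.
        apply: cont_measD; first exact: mS3.
        by apply: min_cont; apply: mul_cont; [exact: c21|exact: coord_cont _ k c11|exact: c22|exact: coord_cont _ k c12].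
      + apply: emeasurable_funM; first exact: measurable_cst.
        by apply: mE; apply: measurable_funM.
      + move=> z Dz; rewrite -EFinM lee_fin /c.
        case: eqP => [->|_]; case: eqP => [->|_] /=; try lra.
        have : Num.min (z.2.1 * x0 ord0 k) (z.2.2 * y0 ord0 k) <= z.2.2 * y0 ord0 k.
          by rewrite ge_min lexx orbT.
        lra.
    have f10 : forall z : T, D z -> (0 <= (z.2.2 * c x0 y0 z)%:E)%E.
      by move=> z Dz; rewrite lee_fin mulr_ge0 ?L0Y //; case/andP: (c01 x0 y0 z).
    have mf1 : measurable_fun D (fun z : T => (z.2.2 * c x0 y0 z)%:E).
      by apply: mE; apply: measurable_funM.
    by rewrite (ge0_integralZl_EFin g mS3 f10 mf1 (sy0 k)) -beE -EFinM mulrC.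
clearbody m.
pose nU (z : T) : R := (z.1.1 \notin U)%:R.
pose nV (z : T) : R := (z.1.2 \notin V)%:R.
have pw z : D z -> m z <= \sum_(x0 <- U) \sum_(y0 <- V) c x0 y0 z * m z
                         + (z.2.1 * nU z + z.2.2 * nV z).
  move=> Dz.
  have sc : \sum_(x0 <- U) \sum_(y0 <- V) c x0 y0 z * m z =
      (z.1.1 \in U)%:R * (z.1.2 \in V)%:R * m z.
    rewrite -(@sum_ind R n U z.1.1 uU) -(@sum_ind R n V z.1.2 uV) !mulr_suml.
    by apply: eq_bigr => x0 _; rewrite mulr_sumr mulr_suml.
  rewrite sc /nU /nV; have [h1 h2] := mle z Dz.
  have := m0 z Dz; have := L0X z Dz; have := L0Y z Dz.
  by case: (z.1.1 \in U); case: (z.1.2 \in V) => /=; lra.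
have mnU : measurable_fun D nU := meas_notin g _ _ _ _ c11 c21 L0X hu hX.
have mnV : measurable_fun D nV := meas_notin g _ _ _ _ c12 c22 L0Y hv hY.
have mcm x0 y0 : measurable_fun D (fun z : T => (c x0 y0 z * m z)%:E).
  by apply: mE; apply: measurable_funM.
have cm0 x0 y0 z : D z -> (0 <= (c x0 y0 z * m z)%:E)%E.
  by move=> Dz; rewrite lee_fin mulr_ge0 ?m0 //; case/andP: (c01 x0 y0 z).
have mS : measurable_fun D (fun z : T =>
    \sum_(x0 <- U) \sum_(y0 <- V) (c x0 y0 z * m z)%:E).
  by apply: emeasurable_sum => x0; apply: emeasurable_sum => y0; exact: mcm.
have S0 z : D z -> (0 <= \sum_(x0 <- U) \sum_(y0 <- V) (c x0 y0 z * m z)%:E)%E.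
  by move=> Dz; apply: sume_ge0 => x0 _; apply: sume_ge0 => y0 _; exact: cm0.
have mR1 : measurable_fun D (fun z : T => (z.2.1 * nU z)%:E).
  by apply: mE; apply: measurable_funM.
have mR2 : measurable_fun D (fun z : T => (z.2.2 * nV z)%:E).
  by apply: mE; apply: measurable_funM.
have R10 z : D z -> (0 <= (z.2.1 * nU z)%:E)%E.
  by move=> Dz; rewrite lee_fin mulr_ge0 ?L0X // /nU; case: (_ \notin _).
have R20 z : D z -> (0 <= (z.2.2 * nV z)%:E)%E.
  by move=> Dz; rewrite lee_fin mulr_ge0 ?L0Y // /nV; case: (_ \notin _).
have hmA : (\int[g]_(z in D) (m z)%:E <= A%:E)%E.
  apply: (@le_trans _ _ (\int[g]_(z in D) (\sum_(x0 <- U) \sum_(y0 <- V) (c x0 y0 z * m z)%:E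
      + ((z.2.1 * nU z)%:E + (z.2.2 * nV z)%:E)))%E).
    apply: ge0_le_integral.
    - exact: mS3.
    - exact: m0E.
    - exact: mmE.
    - by apply: emeasurable_funD => //; exact: emeasurable_funD.
    - move=> z Dz; under eq_bigr do rewrite sumEFin.
      by rewrite sumEFin -!EFinD lee_fin pw.
  rewrite (ge0_integralD g mS3 S0 mS); first last.
  - by apply: emeasurable_funD.
  - by move=> z Dz; rewrite adde_ge0 ?R10 ?R20.
  rewrite (ge0_integralD g mS3 R10 mR1 R20 mR2).
  rewrite (int_out g _ _ _ _ c11 c21 L0X hu hX) (int_out g _ _ _ _ c12 c22 L0Y hv hY).
  rewrite !adde0 ge0_integral_sum; first last.
  - by move=> x0 z Dz; apply: sume_ge0 => y0 _; exact: cm0.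
  - by move=> x0; apply: emeasurable_sum => y0; exact: mcm.
  - exact: mS3.
  rewrite /A -sumEFin big_seq [X in (_ <= X)%E]big_seq; apply: lee_sum => x0 x0U.
  rewrite ge0_integral_sum; first last.
  - by move=> y0 z Dz; exact: cm0.
  - by move=> y0; exact: mcm.
  - exact: mS3.
  rewrite -sumEFin big_seq [X in (_ <= X)%E]big_seq; apply: lee_sum => y0 y0V.
  exact: cell.
have eq : (\int[g]_(z in D) (l1norm (z.2.1 *: z.1.1 - z.2.2 *: z.1.2))%:E
    + (\int[g]_(z in D) (m z)%:E + \int[g]_(z in D) (m z)%:E) = 1 + 1)%E.
  by rewrite -E2 -E1 E4 E3 iX iY.
have I0 : (0 <= \int[g]_(z in D) (m z)%:E)%E by apply: integral_ge0.
have fI : (\int[g]_(z in D) (m z)%:E = (fine (\int[g]_(z in D) (m z)%:E))%:E)%E.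
  rewrite fineK // ge0_fin_numE //; apply: (le_lt_trans hmA); exact: ltry.
have hr : fine (\int[g]_(z in D) (m z)%:E)%E <= A by rewrite -lee_fin -fI.
rewrite fI in eq.
move: (fine (\int[g]_(z in D) (m z)%:E)%E) hr eq => r hr.
case: (\int[g]_(z in D) (l1norm (z.2.1 *: z.1.1 - z.2.2 *: z.1.2))%:E)%E => [s1| |] //=.
rewrite -!EFinD => -[h]; rewrite lee_fin; lra.
Qed.







End Meas.

Local Close Scope classical_set_scope.

Theorem lemma5 (R : realType) (n : nat) (U V : seq 'rV[R]_n)
  (wu wv : 'rV[R]_n -> R) :
  (0 < n)%N -> fin_prob U wu -> fin_prob V wv ->
  (d5 U V wu wv <= d3 U V wu wv)%E.
Proof.
move=> _ hu hv; apply: le_ereal_inf_tmp => _ [g hg <-].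
exact: main_ineq.
Qed.
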